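(* In a public goods economy (as in the context), at any outcome $\mathbf{a}$ with $\mathbf{0}<\mathbf{a}<\mathbf{1}$, exactly one of the following three conditions holds: (1) there exist directions $\mathbf{v}_{up}>\mathbf{0}$, $\mathbf{v}_{down}<\mathbf{0}$ such that $\mathbf{d}_{\mathbf{v}_{up}}\mathbf{u}(\mathbf{a})>\mathbf{0}$ and $\mathbf{d}_{\mathbf{v}_{down}}\mathbf{u}(\mathbf{a})<\mathbf{0}$; (2) there exist directions $\mathbf{v}_{up}>\mathbf{0}$, $\mathbf{v}_{down}<\mathbf{0}$ such that $\mathbf{d}_{\mathbf{v}_{up}}\mathbf{u}(\mathbf{a})\le\mathbf{0}$ and $\mathbf{d}_{\mathbf{v}_{down}}\mathbf{u}(\mathbf{a})\le\mathbf{0}$; (3) there exist directions $\mathbf{v}_{up}>\mathbf{0}$, $\mathbf{v}_{down}<\mathbf{0}$ such that $\mathbf{d}_{\mathbf{v}_{up}}\mathbf{u}(\mathbf{a})<\mathbf{0}$ and $\mathbf{d}_{\mathbf{v}_{down}}\mathbf{u}(\mathbf{a})>\mathbf{0}$.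
   Context: Agents $N=\{1,\dots,n\}$; outcomes are vectors in $[0,1]^n$. Vector orderings: $\mathbf{x}\ge\mathbf{y}$ (resp. $\le$) means $x_i\ge y_i$ (resp. $\le$) for all $i$; $\mathbf{x}>\mathbf{y}$ (resp. $<$) means strict inequality in every coordinate; $\mathbf{x}\gneq\mathbf{y}$ means $\mathbf{x}\ge\mathbf{y}$ and $x_j>y_j$ for some $j$. $\mathbf{0},\mathbf{1}$ are the all-zeros and all-ones vectors. The utility function $\mathbf{u}:[0,1]^n\to[0,1]^n$ is continuous, concave, and has positive externalities: whenever $\mathbf{a}\gneq\mathbf{a}'$ and $a_i=a'_i$, then $u_i(\mathbf{a})>u_i(\mathbf{a}')$. For a direction $\mathbf{v}\in\mathbb{R}^n$, $\mathbf{d}_{\mathbf{v}}\mathbf{u}(\mathbf{a}):=\lim_{\lambda\to0^+}\frac{\mathbf{u}(\mathbf{a}+\lambda\mathbf{v})-\mathbf{u}(\mathbf{a})}{\lambda}$ is the one-sided directional derivative (a vector in $\mathbb{R}^n$). *)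

(* Defs.v *)
From HB Require Import structures.
From mathcomp Require Import all_boot all_order all_algebra.
From mathcomp Require Import all_classical all_reals all_analysis.
Set Implicit Arguments. Unset Strict Implicit. Unset Printing Implicit Defensive.
Import Order.TTheory GRing.Theory Num.Theory.
Import numFieldNormedType.Exports.
Local Open Scope classical_set_scope.
Local Open Scope ring_scope.

Section Defs.
Context {R : realType} {n : nat}.
Implicit Types (x y a v d : 'rV[R]_n).

Definition vle x y := forall i : 'I_n, x ord0 i <= y ord0 i.
Definition vlt x y := forall i : 'I_n, x ord0 i < y ord0 i.
Definition vlneq x y := vle y x /\ exists j : 'I_n, y ord0 j < x ord0 j. (* x gneq y *)

Definition cube : set 'rV[R]_n := [set x | vle 0 x /\ vle x (const_mx 1)].

Definition utility (u : 'rV[R]_n -> 'rV[R]_n) : Prop :=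
  [/\ (forall x, cube x -> cube (u x)),
      {within cube, continuous u},
      (forall x y (t : R), cube x -> cube y -> 0 <= t <= 1 ->
         forall i : 'I_n,
           t * u x ord0 i + (1 - t) * u y ord0 i
             <= u (t *: x + (1 - t) *: y) ord0 i) &
      (* positive externalities *)
      (forall x y, cube x -> cube y -> vlneq x y ->
         forall i : 'I_n, x ord0 i = y ord0 i -> u y ord0 i < u x ord0 i)].

Definition dirderiv_is (u : 'rV[R]_n -> 'rV[R]_n) a v d : Prop :=
  (fun l : R => l^-1 *: (u (a + l *: v) - u a)) @ 0^'+ --> d.
End Defs.

(* Main.v *)
Require Import Defs.
From HB Require Import structures.
From mathcomp Require Import all_boot all_order all_algebra.
From mathcomp Require Import all_classical all_reals all_analysis.
From mathcomp Require Import ring lra.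
Import Order.TTheory GRing.Theory Num.Theory.
Import numFieldNormedType.Exports.
Local Open Scope classical_set_scope.
Local Open Scope ring_scope.
Set Implicit Arguments. Unset Strict Implicit. Unset Printing Implicit Defensive.

Section Helpers.
Context {R : realType}.

Lemma nrm_coord n (v : 'rV[R]_n) i : `|v ord0 i| <= `|v|.
Proof.
rewrite [leRHS]/Num.Def.normr /= mx_normrE; apply/bigmax_geP; right => /=.
by exists (ord0, i).
Qed.

Lemma nrm_le n (v : 'rV[R]_n) c : 0 <= c -> (forall i, `|v ord0 i| <= c) -> `|v| <= c.
Proof.
move=> c0 h; rewrite [leLHS]/Num.Def.normr /= mx_normrE; apply/bigmax_leP; split => //.
by case=> x j _ /=; rewrite (ord1 x).
Qed.

Lemma fin_min (I : finType) (x : I -> R) :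
  (forall i, 0 < x i) -> exists2 e, 0 < e & forall i, e <= x i.
Proof.
move=> h; exists (\big[Order.min/1]_i x i); last by move=> i; exact: bigmin_le.
by apply: lt_bigmin => // i _; exact: h.
Qed.

Lemma fin_argmax n (hn : (0 < n)%N) (f : 'I_n -> R) :
  exists i, forall j, f j <= f i.
Proof.
case: (arg_maxP f (i0 := Ordinal hn) (P := predT) isT) => i _ h.
by exists i => j; exact: h.
Qed.

Lemma le0_eps (x : R) : (forall e, 0 < e -> x <= e) -> x <= 0.
Proof.
move=> h; rewrite leNgt; apply/negP => x0.
have := h (x / 2); rewrite divr_gt0 // => /(_ isT).
rewrite ler_pdivlMr // => h2; nra.
Qed.

Definition ek n (k : 'I_n) : 'rV[R]_n := \row_j ((j == k)%:R).

Lemma ekE n (k j : 'I_n) : ek k ord0 j = (j == k)%:R.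
Proof. by rewrite mxE. Qed.

Lemma nrm_ek n (k : 'I_n) (t : R) : 0 <= t -> `|t *: ek k| <= t.
Proof.
move=> t0; apply: nrm_le => // j; rewrite !mxE.
by case: (j == k); rewrite ?mulr1 ?mulr0 ?normr0 // ger0_norm.
Qed.

Lemma coord_le_sum n (v : 'rV[R]_n) i : (forall j, 0 <= v ord0 j) ->
  v ord0 i <= \sum_j v ord0 j.
Proof.
move=> h; rewrite (bigD1 i) //= lerDl; apply: sumr_ge0 => j _; exact: h.
Qed.

End Helpers.
Section PF.
Context {R : realType} {n : nat} (F : 'rV[R]_n -> 'rV[R]_n) (K : R).
Hypothesis K0 : 0 <= K.
Hypothesis FL : forall v w i, `|F v ord0 i - F w ord0 i| <= K * `|v - w|.
Hypothesis FH : forall (t : R) v, 0 < t -> F (t *: v) = t *: F v.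
Hypothesis FM : forall v (i k : 'I_n) (t : R), k != i -> 0 < t ->
  F v ord0 i < F (v + t *: ek k) ord0 i.

Lemma F0 : F 0 = 0.
Proof.
have := FH 0 (ltr0Sn _ 1); rewrite scaler0 => h.
apply/rowP => j; have := congr1 (fun M : 'rV[R]_n => M ord0 j) h.
rewrite /= !mxE => h2; lra.
Qed.

Lemma FMw v (i k : 'I_n) (t : R) : k != i -> 0 <= t ->
  F v ord0 i <= F (v + t *: ek k) ord0 i.
Proof.
move=> ki; rewrite le_eqVlt => /orP[/eqP <-|t0].
  by rewrite scale0r addr0.
exact/ltW/FM.
Qed.

Lemma Fmono v d (i : 'I_n) : vle 0 d -> d ord0 i = 0 ->
  F v ord0 i <= F (v + d) ord0 i.
Proof.
move=> d0 di.
pose dm m := \row_(j < n) (if (j < m)%N then d ord0 j else 0).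
suff h : forall m, F v ord0 i <= F (v + dm m) ord0 i.
  have -> : d = dm n by apply/rowP => j; rewrite mxE ltn_ord.
  exact: h.
elim=> [|m ih].
  have -> : dm 0%N = 0 by apply/rowP => j; rewrite !mxE.
  by rewrite addr0.
case: (ltnP m n) => hm.
  pose k := Ordinal hm.
  have -> : dm m.+1 = dm m + d ord0 k *: ek k.
    apply/rowP => j; rewrite !mxE ltnS leq_eqVlt.
    case: (eqVneq j k) => [->|jk] /=; first by rewrite eqxx ltnn mulr1 add0r.
    rewrite mulr0 addr0.
    have -> : (nat_of_ord j == m) = false.
      by apply/negbTE; apply: contra jk => /eqP hj; apply/eqP/val_inj.
    by [].
  rewrite addrA; apply: (le_trans ih).
  case: (eqVneq k i) => [ki|ki].
    by rewrite ki di scale0r addr0.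
  apply: FMw => //; have := d0 k; by rewrite mxE.
have -> : dm m.+1 = dm m.
  apply/rowP => j; rewrite !mxE.
  have h1 : (j < m)%N by apply: leq_trans (ltn_ord j) hm.
  by rewrite h1 (ltn_trans h1 (ltnSn m)).
exact: ih.
Qed.

Lemma Fcompare (hn : (0 < n)%N) v w : vlt 0 v -> vlt 0 w ->
  exists i (t : R), 0 < t /\ F v ord0 i <= t * F w ord0 i.
Proof.
move=> v0 w0.
have v0' j : 0 < v ord0 j by have := v0 j; rewrite mxE.
have w0' j : 0 < w ord0 j by have := w0 j; rewrite mxE.
have [i hi] := fin_argmax hn (fun j => v ord0 j / w ord0 j).
set t := v ord0 i / w ord0 i.
have t0 : 0 < t by rewrite divr_gt0.
exists i, t; split => //.
have -> : t * F w ord0 i = F (t *: w) ord0 i by rewrite FH // mxE.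
have -> : t *: w = v + (t *: w - v) by rewrite addrC subrK.
apply: Fmono.
  move=> j; rewrite !mxE subr_ge0.
  by have := hi j; rewrite ler_pdivrMr.
by rewrite !mxE /t divfK ?subrr // gt_eqF.
Qed.
Lemma sum_constN (c : R) : \sum_(i < n) c = c * n%:R.
Proof. by rewrite sumr_const card_ord mulr_natr. Qed.

Lemma sum_ek (k : 'I_n) : \sum_i (ek k : 'rV[R]_n) ord0 i = 1.
Proof.
rewrite (bigD1 k) //= ekE eqxx big1 ?addr0 // => i ik.
by rewrite ekE (negbTE ik).
Qed.

Lemma PF (hn : (0 < n)%N) : exists v (r : R), vlt 0 v /\ F v = r *: v.
Proof.
set N : R := n%:R.
have N0 : 0 < N by rewrite ltr0n.
pose S := fun v : 'rV[R]_n => (forall j, 0 <= v ord0 j) /\ \sum_j v ord0 j = 1.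
have Sle1 v : S v -> forall j, 0 <= v ord0 j <= 1.
  by move=> [h0 h1] j; rewrite h0 /= -h1 coord_le_sum.
have Snrm v : S v -> `|v| <= 1.
  move=> Sv; apply: nrm_le => // j; have /andP[h0 h1] := Sle1 v Sv j.
  by rewrite ger0_norm.
have Sbig v : S v -> exists j, N^-1 <= v ord0 j.
  move=> [h0 h1]; have [j hj] := fin_argmax hn (fun j => v ord0 j).
  exists j; have : \sum_(l < n) v ord0 l <= \sum_(l < n) v ord0 j.
    by apply: ler_sum => l _; exact: hj.
  rewrite h1 sum_constN => h.
  by rewrite -(ler_pM2l N0) mulfV ?gt_eqF // mulrC.
have FLb v i : `|F v ord0 i| <= K * `|v|.
  by have := FL v 0 i; rewrite F0 subr0 mxE subr0.
pose E := [set r : R | exists v, S v /\ forall j, r * v ord0 j <= F v ord0 j].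
have E0 : E (- (K * N)).
  exists (const_mx N^-1); split.
    split; first by move=> j; rewrite mxE invr_ge0 ltW.
    under eq_bigr do rewrite mxE.
    by rewrite sum_constN mulVf ?gt_eqF.
  move=> j; rewrite mxE mulNr -mulrA mulfV ?gt_eqF // mulr1.
  have Sv : S (const_mx N^-1).
    split; first by move=> l; rewrite mxE invr_ge0 ltW.
    under eq_bigr do rewrite mxE.
    by rewrite sum_constN mulVf ?gt_eqF.
  have := Snrm _ Sv; have := FLb (const_mx N^-1) j.
  move: (F (const_mx N^-1) ord0 j) => x; rewrite ler_norml => /andP[h1 h2] h3.
  have := ler_wpM2l K0 h3; rewrite mulr1 => h4; lra.
have Eub : ubound E (K * N).
  move=> r [v [Sv hv]]; have [j hj] := Sbig v Sv.
  have h1 := hv j; have h2 := FLb v j; have h3 := Snrm v Sv.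
  have h4 : 0 <= v ord0 j by have /andP[] := Sle1 v Sv j.
  have h5 : N * N^-1 = 1 by rewrite mulfV ?gt_eqF.
  have h6 : 0 <= N^-1 by rewrite invr_ge0 ltW.
  move: (F v ord0 j) h1 h2 => x h1; rewrite ler_norml => /andP[_ h2].
  have h7 := ler_wpM2l K0 h3; rewrite mulr1 in h7.
  have h8 : 0 <= K * N by rewrite mulr_ge0 // ltW.
  have [r0|r0] := leP r 0; first by lra.
  have h9 := ler_wpM2l (ltW r0) hj.
  have : r * N^-1 <= K by lra.
  by rewrite -ler_pdivlMr ?invr_gt0 // invrK.
have hsup : has_sup E by split; [exists (- (K * N)) | exists (K * N)].
set rs := sup E.
have hseq : forall k : nat, exists v, S v /\
    forall j, (rs - k.+1%:R^-1) * v ord0 j <= F v ord0 j.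
  move=> k; have [e [v [Sv hv]] he] : exists2 e, E e & rs - k.+1%:R^-1 < e.
    by apply: sup_adherent => //; rewrite invr_gt0 ltr0Sn.
  exists v; split => // j; apply: le_trans (hv j).
  have /andP[h0 _] := Sle1 v Sv j; apply: ler_wpM2r => //.
  by rewrite ltW.
have [vs hvs] := choice hseq.
pose B := [set v : 'rV[R]_n | forall i, (fun=> `[(0:R), 1]%classic) i (v ord0 i)].
have Bc : compact B.
  by apply: rV_compact => i; exact: segment_compact.
have [p [Bp clp]] : B `&` cluster (vs @ \oo) !=set0.
  apply: Bc.
  exists 0%N => // k _ i /=; rewrite in_itv /=.
  exact: Sle1 (proj1 (hvs k)) i.
have p01 j : 0 <= p ord0 j <= 1 by have := Bp j; rewrite /= in_itv.
have approx : forall (e : R) (M : nat), 0 < e ->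
    exists k, (M <= k)%N /\ `|p - vs k| < e.
  move=> e M e0.
  have [x [[k [hk ->]] hb]] :=
    clp [set x | exists k, (M <= k)%N /\ x = vs k] (ball p e)
      (ex_intro2 _ _ M I (fun k hk => ex_intro _ k (conj hk erefl)))
      (nbhsx_ballx p e e0).
  by exists k; split => //; rewrite -ball_normE in hb.
have Sp : \sum_j p ord0 j = 1.
  have h : forall e, 0 < e -> `|\sum_j p ord0 j - 1| <= e.
    move=> e e0; have [k [_ hk]] := approx (e / N) 0%N (divr_gt0 e0 N0).
    rewrite -(proj2 (proj1 (hvs k))) -sumrB.
    apply: le_trans (ler_norm_sum _ _ _) _.
    apply: (@le_trans _ _ (\sum_(j < n) `|p - vs k|)).
      by apply: ler_sum => j _; have := nrm_coord (p - vs k) j; rewrite !mxE.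
    rewrite sum_constN; rewrite ltr_pdivlMr // in hk; exact: ltW.
  have := le0_eps h; rewrite normr_le0 subr_eq0 => /eqP //.
have hle : forall j, rs * p ord0 j <= F p ord0 j.
  move=> j; rewrite -subr_le0; apply: le0_eps => e e0.
  set C := `|rs| + K + 1.
  have C0 : 0 < C.
    by apply: (le_lt_trans (addr_ge0 (normr_ge0 rs) K0)); rewrite /C ltrDl ltr01.
  have e2 : 0 < e / 2 by rewrite divr_gt0.
  have [M _ hM] := near_infty_natSinv_lt (PosNum e2).
  have eC : 0 < e / (2 * C) by rewrite divr_gt0 // mulr_gt0.
  have [k [hk hd]] := approx (e / (2 * C)) M eC.
  have hk1 := hM k hk; rewrite /= in hk1.
  have [[h0 h1] hv] := hvs k.
  have hvk := hv j; have vk01 := Sle1 _ (proj1 (hvs k)) j.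
  have t1 : rs * p ord0 j - rs * vs k ord0 j <= `|rs| * `|p - vs k|.
    rewrite -mulrBr; apply: le_trans (ler_norm _) _; rewrite normrM.
    apply: ler_wpM2l => //; have := nrm_coord (p - vs k) j; by rewrite !mxE.
  have t3 : F (vs k) ord0 j - F p ord0 j <= K * `|p - vs k|.
    apply: le_trans (ler_norm _) _; rewrite -[p - vs k]opprB normrN; exact: FL.
  have t4 : (`|rs| + K) * `|p - vs k| <= e / 2.
    apply: (@le_trans _ _ (C * (e / (2 * C)))).
      apply: ler_pM; rewrite ?addr_ge0 //; last exact: ltW.
      by rewrite /C lerDl.
    have -> : C * (e / (2 * C)) = e / 2.
      field; rewrite gt_eqF //.
    by [].
  have hq : 0 <= (k.+1%:R^-1 : R) by rewrite invr_ge0.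
  move: hq; move: (`|rs|) (`|p - vs k|) (F (vs k) ord0 j) (F p ord0 j) (k.+1%:R^-1 : R)
    (vs k ord0 j) t1 t3 t4 hk1 hvk vk01 => a d x y q w t1 t3 t4 hk1 hvk /andP[w0 w1] hq.
  have : q * w <= q by rewrite -subr_ge0 -{1}(mulr1 q) -mulrBr mulr_ge0 // subr_ge0.
  lra.
have eig : forall j, F p ord0 j = rs * p ord0 j.
  move=> j; apply/eqP; rewrite eq_le hle andbT leNgt; apply/negP => hlt.
  set dl := F p ord0 j - rs * p ord0 j.
  have dl0 : 0 < dl by rewrite subr_gt0.
  set C := `|rs| + K + 1.
  have C0 : 0 < C.
    by apply: (le_lt_trans (addr_ge0 (normr_ge0 rs) K0)); rewrite /C ltrDl ltr01.
  set eps := dl / C.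
  have eps0 : 0 < eps by rewrite divr_gt0.
  have epsC : eps * C = dl by rewrite /eps divfK // gt_eqF.
  set p' := p + eps *: ek j.
  have p'E i : p' ord0 i = p ord0 i + eps * (i == j)%:R by rewrite !mxE.
  have hall : forall i, 0 < F p' ord0 i - rs * p' ord0 i.
    move=> i; rewrite subr_gt0; case: (eqVneq i j) => [->|ij].
      have h1 := FL p' p j.
      have e1 : p' - p = eps *: ek j by rewrite /p' addrC addKr.
      rewrite e1 in h1.
      have h2 := nrm_ek j (ltW eps0).
      rewrite p'E eqxx mulr1.
      have h3 : rs <= `|rs| := ler_norm rs.
      move: h1 h2 h3 epsC; rewrite /dl /C.
      move: (F p' ord0 j) (F p ord0 j) (`|eps *: ek j|) (`|rs|) (p ord0 j) => x y z a w.
      rewrite ler_norml => /andP[h1 _] h2 h3 h4.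
      have h5 : K * z <= K * eps by apply: ler_wpM2l.
      have h6 : rs * eps <= a * eps by apply: ler_wpM2r => //; exact: ltW.
      lra.
    rewrite p'E (negbTE ij) mulr0 addr0.
    apply: le_lt_trans (hle i) _.
    by apply: FM => //; rewrite eq_sym.
  have [eta eta0 heta] := fin_min hall.
  set c := \sum_i p' ord0 i.
  have cE : c = 1 + eps.
    rewrite /c; under eq_bigr do rewrite p'E.
    rewrite big_split /= Sp -mulr_sumr.
    have -> : \sum_i ((i == j)%:R : R) = 1.
      by rewrite -[RHS](sum_ek j); apply: eq_bigr => i _; rewrite ekE.
    by rewrite mulr1.
  have c0 : 0 < c by rewrite cE; apply: addr_gt0.
  set r' := rs + eta / (1 + eps).
  have Er' : E r'.
    exists (c^-1 *: p'); split.
      split.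
        move=> i; rewrite mxE p'E; apply: mulr_ge0; first by rewrite invr_ge0 ltW.
        apply: addr_ge0; first by case/andP: (p01 i).
        by apply: mulr_ge0; [exact: ltW | exact: ler0n].
      by rewrite /c; under eq_bigr do rewrite mxE; rewrite -mulr_sumr mulVf // gt_eqF.
    move=> i; rewrite FH ?invr_gt0 // !mxE mulrCA; apply: ler_wpM2l.
      by rewrite invr_ge0 ltW.
    have := heta i; rewrite /r' p'E.
    have := p01 i; move: (F p' ord0 i) (p ord0 i) => x w /andP[w0 w1].
    have h1 : 0 <= ((i == j)%:R : R) <= 1.
      by rewrite ler0n /=; case: (i == j) => /=; rewrite ?lexx ?ler01.
    case/andP: h1 => b0 b1.
    move: ((i == j)%:R : R) b0 b1 => b b0 b1 h.
    have h2 : eta / (1 + eps) * (w + eps * b) <= eta.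
      have e1 : 0 < 1 + eps by apply: addr_gt0.
      have hz : eta / (1 + eps) * (1 + eps) = eta by rewrite divfK // gt_eqF.
      rewrite -[leRHS]hz; apply: ler_wpM2l; first by apply: divr_ge0; apply: ltW.
      have : eps * b <= eps by rewrite -[leRHS](mulr1 eps) ler_wpM2l // ltW.
      lra.
    lra.
  have h := sup_upper_bound hsup Er'; rewrite -/rs /r' in h.
  have hz : 0 < eta / (1 + eps) by rewrite divr_gt0 // addr_gt0.
  move: h hz; move: (eta / (1 + eps)) => z; lra.
have ppos : forall k, 0 < p ord0 k.
  move=> k; have /andP[pk0 _] := p01 k.
  rewrite lt_def pk0 andbT; apply/negP => /eqP pk.
  have Spp : S p by split => // l; case/andP: (p01 l).
  have [j hj] := Sbig p Spp.
  have pj : 0 < p ord0 j by apply: lt_le_trans hj; rewrite invr_gt0.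
  have jk : j != k by apply/eqP => e; rewrite e pk ltxx in pj.
  set d := p - p ord0 j *: ek j.
  have hd0 : vle 0 d.
    move=> i; rewrite !mxE; case: (eqVneq i j) => [->|ij].
      by rewrite mulr1 subrr.
    by rewrite mulr0 subr0; case/andP: (p01 i).
  have hdk : d ord0 k = 0.
    by rewrite !mxE eq_sym (negbTE jk) mulr0 subr0.
  have h1 := Fmono 0 hd0 hdk; rewrite add0r F0 mxE in h1.
  have h2 := FM d jk pj.
  have e2 : d + p ord0 j *: ek j = p by rewrite /d subrK.
  rewrite e2 eig pk mulr0 in h2.
  by have := le_lt_trans h1 h2; rewrite ltxx.
exists p, rs; split.
  by move=> i; rewrite mxE; exact: ppos.
by apply/rowP => j; rewrite mxE eig.
Qed.
End PF.
Section Dir.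
Context {R : realType} {n : nat} (u : 'rV[R]_n -> 'rV[R]_n) (a : 'rV[R]_n).
Hypothesis hu : utility u.
Variable L : R.
Hypothesis L0 : 0 < L.
Hypothesis La : forall i, L <= a ord0 i.
Hypothesis La1 : forall i, L <= 1 - a ord0 i.

Lemma cubeL v (l : R) : `|l| * `|v| <= L -> cube (a + l *: v).
Proof.
move=> h; have hi i : `|l * v ord0 i| <= L.
  by rewrite normrM; apply: le_trans h; apply: ler_wpM2l => //; exact: nrm_coord.
split => i; rewrite !mxE; have := hi i; rewrite ler_norml => /andP[h1 h2].
  by have := La i; lra.
by have := La1 i; lra.
Qed.

Definition q v i (l : R) := l^-1 * (u (a + l *: v) ord0 i - u a ord0 i).

Lemma cube_a : cube a.
Proof.
have h : `|(0:R)| * `|(0 : 'rV[R]_n)| <= L by rewrite normr0 mul0r ltW.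
by have := cubeL h; rewrite scaler0 addr0.
Qed.

Lemma u01 x i : cube x -> 0 <= u x ord0 i <= 1.
Proof.
case: hu => hc _ _ _ cx; have [h0 h1] := hc x cx.
by have := h0 i; have := h1 i; rewrite !mxE => -> ->.
Qed.

Lemma conc x y (t : R) i : cube x -> cube y -> 0 <= t <= 1 ->
  t * u x ord0 i + (1 - t) * u y ord0 i <= u (t *: x + (1 - t) *: y) ord0 i.
Proof. by case: hu => _ _ hc _ cx cy ht; exact: hc. Qed.

Lemma qmono v i (s t : R) : 0 < s -> s <= t -> t * `|v| <= L -> q v i t <= q v i s.
Proof.
move=> s0 st hL.
have t0 : 0 < t := lt_le_trans s0 st.
have cx : cube (a + t *: v) by apply: cubeL; rewrite gtr0_norm.
have lam : 0 <= s / t <= 1.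
  apply/andP; split; first by apply: divr_ge0; apply: ltW.
  by rewrite ler_pdivrMr // mul1r.
have h := conc i cx cube_a lam.
have eq1 : s / t *: (a + t *: v) + (1 - s / t) *: a = a + s *: v.
  apply/rowP => j; rewrite !mxE; field; by rewrite gt_eqF.
rewrite eq1 in h.
rewrite /q.
have -> : t^-1 * (u (a + t *: v) ord0 i - u a ord0 i) =
          s^-1 * (s / t * (u (a + t *: v) ord0 i - u a ord0 i)).
  field; rewrite !gt_eqF //.
apply: ler_wpM2l; first by rewrite invr_ge0 ltW.
move: h; move: (s / t) (u (a + t *: v) ord0 i) (u a ord0 i) (u (a + s *: v) ord0 i).
move=> c x y z h; lra.
Qed.

Lemma qlow v i (t : R) : 0 < t -> t * `|v| <= L -> - t^-1 <= q v i t.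
Proof.
move=> t0 hL; have cx : cube (a + t *: v) by apply: cubeL; rewrite gtr0_norm.
have /andP[h0 _] := u01 i cx; have /andP[_ h1] := u01 i cube_a.
rewrite /q -mulrN1; apply: ler_wpM2l; first by rewrite invr_ge0 ltW.
lra.
Qed.

Lemma qmid v i (s : R) : 0 < s -> s * `|v| <= L -> q v i s + q (- v) i s <= 0.
Proof.
move=> s0 hL.
have cx : cube (a + s *: v) by apply: cubeL; rewrite gtr0_norm.
have cy : cube (a + s *: - v) by apply: cubeL; rewrite gtr0_norm // normrN.
have lam : 0 <= (2^-1 : R) <= 1 by rewrite invr_ge0 ler0n /= invf_le1 // ler1n.
have h := conc i cx cy lam.
have eq1 : 2^-1 *: (a + s *: v) + (1 - 2^-1) *: (a + s *: - v) = a.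
  by apply/rowP => j; rewrite !mxE; field.
rewrite eq1 in h; rewrite /q -mulrDr; apply: mulr_ge0_le0.
  by rewrite invr_ge0 ltW.
lra.
Qed.

Lemma qconc v w i (s : R) : 0 < s -> s * `|v| <= L -> s * `|w| <= L ->
  2^-1 * q v i s + 2^-1 * q w i s <= q (2^-1 *: (v + w)) i s.
Proof.
move=> s0 hv hw.
have cx : cube (a + s *: v) by apply: cubeL; rewrite gtr0_norm.
have cy : cube (a + s *: w) by apply: cubeL; rewrite gtr0_norm.
have lam : 0 <= (2^-1 : R) <= 1 by rewrite invr_ge0 ler0n /= invf_le1 // ler1n.
have h := conc i cx cy lam.
have eq1 : 2^-1 *: (a + s *: v) + (1 - 2^-1) *: (a + s *: w) = a + s *: (2^-1 *: (v + w)).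
  by apply/rowP => j; rewrite !mxE; field.
rewrite eq1 in h; rewrite /q.
have -> : 2^-1 * (s^-1 * (u (a + s *: v) ord0 i - u a ord0 i)) +
   2^-1 * (s^-1 * (u (a + s *: w) ord0 i - u a ord0 i)) =
   s^-1 * (2^-1 * u (a + s *: v) ord0 i + (1 - 2^-1) * u (a + s *: w) ord0 i - u a ord0 i).
  by field; rewrite gt_eqF.
apply: ler_wpM2l; first by rewrite invr_ge0 ltW.
lra.
Qed.

Lemma qscale v i (c l : R) : 0 < c -> l != 0 -> q (c *: v) i l = c * q v i (c * l).
Proof.
move=> c0 l0; rewrite /q scalerA [l * c]mulrC invfM.
by field; rewrite l0 gt_eqF.
Qed.

Lemma q0 i (l : R) : q 0 i l = 0.
Proof. by rewrite /q scaler0 addr0 subrr mulr0. Qed.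

Definition tv (v : 'rV[R]_n) : R := L / (`|v| + 1).

Lemma tv0 v : 0 < tv v.
Proof. by rewrite divr_gt0 // ltr_wpDl. Qed.

Lemma tvL v : tv v * `|v| <= L.
Proof.
by rewrite /tv mulrAC ler_pdivrMr ?ltr_wpDl // ler_wpM2l ?ltW // ltrDl.
Qed.

Lemma qcvg v i : cvg (q v i x @[x --> 0^'+]).
Proof.
apply/cvg_ex; eexists.
apply: (@nonincreasing_at_right_cvgr _ _ _ (BLeft (tv v))).
- by rewrite bnd_simp tv0.
- move=> x y; rewrite !in_itv /= => /andP[x0 xt] /andP[y0 yt] xy.
  apply: qmono => //; apply: le_trans (tvL v).
  by apply: ler_wpM2r => //; exact: ltW.
- exists (tv v)^-1 => _ [x /andP[x0 xt] <-].
  have h1 := qmid i x0 (le_trans (ler_wpM2r (normr_ge0 v) (ltW xt)) (tvL v)).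
  have hL : tv v * `|- v| <= L by rewrite normrN tvL.
  have h2 := qmono i x0 (ltW xt) hL.
  have h3 := qlow i (tv0 v) hL.
  move: h1 h2 h3; move: (q v i x) (q (- v) i x) (q (- v) i (tv v)) ((tv v)^-1).
  move=> p1 p2 p3 p4; lra.
Qed.
Definition Dc v i := lim (q v i x @[x --> 0^'+]).

Lemma smallL v (s : R) : s <= tv v -> s * `|v| <= L.
Proof. by move=> h; apply: le_trans (tvL v); apply: ler_wpM2r. Qed.

Lemma DA v i (t : R) : 0 < t -> t * `|v| <= L -> q v i t <= Dc v i.
Proof.
move=> t0 hL; apply: limr_ge; first exact: qcvg.
near=> s.
have s0 : 0 < s by near: s; exact: nbhs_right_gt.
have st : s <= t by apply: ltW; near: s; exact: nbhs_right_lt.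
exact: (qmono i s0 st hL).
Unshelve. all: by end_near.
Qed.

Lemma DB v i : Dc v i + Dc (- v) i <= 0.
Proof.
have hc : (fun x => q v i x + q (- v) i x) @ 0^'+ --> Dc v i + Dc (- v) i.
  by apply: cvgD; exact: qcvg.
rewrite -(cvg_lim (@norm_hausdorff _ _) hc); apply: limr_le.
  by apply/cvg_ex; eexists; exact: hc.
near=> s.
have s0 : 0 < s by near: s; exact: nbhs_right_gt.
have st : s * `|v| <= L.
  by apply: smallL; apply: ltW; near: s; apply: nbhs_right_lt; exact: tv0.
exact: (qmid i s0 st).
Unshelve. all: by end_near.
Qed.

Lemma DC v i (c : R) : 0 < c -> Dc (c *: v) i = c * Dc v i.
Proof.
move=> c0.
have h1 : (fun l => c * q v i (c * l)) @ 0^'+ --> c * Dc v i.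
  apply: cvgMr.
  have := @increasing_cvg_at_right_comp R (fun l => c * l) (q v i) 0
    (BInfty _ false) (Dc v i).
  apply => //.
  - by move=> x y _ _ xy; rewrite ltr_pM2l.
  - by apply: cvg_at_right_filter; apply: cvgMr; exact: cvg_id.
  - by rewrite mulr0; exact: qcvg.
have h2 : q (c *: v) i @ 0^'+ --> c * Dc v i.
  apply: cvg_trans h1; apply: near_eq_cvg; near=> l.
  rewrite qscale // gt_eqF //; near: l; exact: nbhs_right_gt.
exact: (cvg_lim (@norm_hausdorff _ _) h2).
Unshelve. all: by end_near.
Qed.
Lemma DD v w i : 2^-1 * Dc v i + 2^-1 * Dc w i <= Dc (2^-1 *: (v + w)) i.
Proof.
have hf : (fun s => 2^-1 * q v i s + 2^-1 * q w i s) @ 0^'+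
    --> 2^-1 * Dc v i + 2^-1 * Dc w i.
  by apply: cvgD; apply: cvgMr; exact: qcvg.
rewrite -(cvg_lim (@norm_hausdorff _ _) hf); apply: ler_lim.
- by apply/cvg_ex; eexists; exact: hf.
- exact: qcvg.
near=> s.
have s0 : 0 < s by near: s; exact: nbhs_right_gt.
have sv : s * `|v| <= L.
  by apply: smallL; apply: ltW; near: s; apply: nbhs_right_lt; exact: tv0.
have sw : s * `|w| <= L.
  by apply: smallL; apply: ltW; near: s; apply: nbhs_right_lt; exact: tv0.
exact: (qconc i s0 sv sw).
Unshelve. all: by end_near.
Qed.

Lemma DS v w i : Dc v i + Dc w i <= Dc (v + w) i.
Proof.
have e1 : v + w = 2 *: (2^-1 *: (v + w)).
  by rewrite scalerA mulfV ?scale1r // pnatr_eq0.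
have h := DD v w i.
rewrite e1 DC //; move: h; move: (Dc v i) (Dc w i) (Dc (2^-1 *: (v + w)) i).
move=> x y z h; lra.
Qed.

Lemma D0 i : Dc 0 i = 0.
Proof.
have := DC 0 i (ltr0Sn R 1); rewrite scaler0 => h.
move: h; move: (Dc 0 i) => x h; lra.
Qed.

Lemma DE (k i : 'I_n) : k != i -> 0 < Dc (ek k) i.
Proof.
move=> ki.
have hek : `|ek k : 'rV[R]_n| <= 1.
  apply: nrm_le => // j; rewrite mxE.
  by case: (j == k); rewrite ?normr1 ?normr0 ?ler01.
have hL : L * `|ek k : 'rV[R]_n| <= L.
  by rewrite -[leRHS]mulr1 ler_wpM2l // ltW.
apply: lt_le_trans (DA i L0 hL).
rewrite /q; apply: mulr_gt0; first by rewrite invr_gt0.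
rewrite subr_gt0; case: hu => _ _ _ hpe; apply: hpe.
- by apply: cubeL; rewrite gtr0_norm.
- exact: cube_a.
- split.
    by move=> j; rewrite !mxE lerDl mulr_ge0 ?ler0n // ltW.
  by exists k; rewrite !mxE eqxx mulr1 ltrDl.
- by rewrite !mxE eq_sym (negbTE ki) mulr0 addr0.
Qed.

Lemma DF d i : - ((`|d| + 1) / L) <= Dc d i.
Proof.
apply: le_trans (DA i (tv0 d) (tvL d)).
by have := qlow i (tv0 d) (tvL d); rewrite /tv invf_div.
Qed.

Lemma DLow d i : - (L^-1 * `|d|) <= Dc d i.
Proof.
rewrite -subr_le0; apply: le0_eps => e e0.
set c := (e * L)^-1.
have c0 : 0 < c by rewrite invr_gt0 mulr_gt0.
have h := DF (c *: d) i; rewrite DC // normrZ gtr0_norm // in h.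
have ce : c * e = L^-1.
  by rewrite /c invfM mulrAC mulVf ?gt_eqF // mul1r.
rewrite -(ler_pM2l c0) ce.
have hL : 0 < L^-1 by rewrite invr_gt0.
move: h; rewrite mulrBr mulrN mulrA (mulrC c) -mulrA.
move: (Dc d i) (`|d|) (L^-1) => x y z h.
rewrite mulrDl mul1r in h; nra.
Qed.

Lemma DLip v w i : `|Dc v i - Dc w i| <= L^-1 * `|v - w|.
Proof.
rewrite ler_norml; apply/andP; split.
  have h1 := DS w (v - w) i.
  have e1 : w + (v - w) = v by rewrite addrC subrK.
  rewrite e1 in h1.
  have h2 := DLow (v - w) i.
  move: h1 h2; move: (Dc v i) (Dc w i) (Dc (v - w) i) (L^-1 * `|v - w|).
  move=> x y z t h1 h2; lra.
have h1 := DS v (w - v) i.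
have e1 : v + (w - v) = w by rewrite addrC subrK.
rewrite e1 in h1.
have h2 := DLow (w - v) i; rewrite distrC in h2.
move: h1 h2; move: (Dc v i) (Dc w i) (Dc (w - v) i) (L^-1 * `|v - w|).
move=> x y z t h1 h2; lra.
Qed.

Definition Dv v : 'rV[R]_n := \row_i Dc v i.

Lemma Dv_cvg v : dirderiv_is u a v (Dv v).
Proof.
rewrite /dirderiv_is; apply/cvgrPdist_le => e e0.
have h : forall i, \forall l \near 0^'+, `|Dc v i - q v i l| <= e.
  by move=> i; have := @qcvg v i; move/cvgrPdist_le => /(_ e e0).
have H := filter_forall _ h.
near=> l.
have hl : forall i, `|Dc v i - q v i l| <= e by near: l; exact: H.
apply: nrm_le; first exact: ltW.
by move=> i; rewrite !mxE; exact: hl.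
Unshelve. all: by end_near.
Qed.

Lemma Dv_uniq v d : dirderiv_is u a v d -> d = Dv v.
Proof.
move=> h; rewrite -(cvg_lim (@norm_hausdorff _ _) h).
exact: (cvg_lim (@norm_hausdorff _ _) (@Dv_cvg v)).
Qed.
Lemma final_dir (hn : (0 < n)%N) :
  let C1 := exists vup vdown du dd, [/\ vlt 0 vup /\ vlt vdown 0,
              dirderiv_is u a vup du, dirderiv_is u a vdown dd,
              vlt 0 du & vlt dd 0] in
  let C2 := exists vup vdown du dd, [/\ vlt 0 vup /\ vlt vdown 0,
              dirderiv_is u a vup du, dirderiv_is u a vdown dd,
              vle du 0 & vle dd 0] in
  let C3 := exists vup vdown du dd, [/\ vlt 0 vup /\ vlt vdown 0,
              dirderiv_is u a vup du, dirderiv_is u a vdown dd,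
              vlt du 0 & vlt 0 dd] in
  (C1 /\ ~ C2 /\ ~ C3) \/ (~ C1 /\ C2 /\ ~ C3) \/ (~ C1 /\ ~ C2 /\ C3).
Proof.
move=> C1 C2 C3.
pose G v := - Dv (- v).
have FL_D v w i : `|Dv v ord0 i - Dv w ord0 i| <= L^-1 * `|v - w|.
  by rewrite !mxE; exact: DLip.
have FH_D (t : R) v : 0 < t -> Dv (t *: v) = t *: Dv v.
  by move=> t0; apply/rowP => j; rewrite !mxE DC.
have FM_D v (i k : 'I_n) (t : R) : k != i -> 0 < t ->
    Dv v ord0 i < Dv (v + t *: ek k) ord0 i.
  move=> ki t0; rewrite !mxE; have := DS v (t *: ek k) i; rewrite DC //.
  have := DE ki; move: (Dc (ek k) i) (Dc v i) (Dc (v + t *: ek k) i) => x y z h1 h2.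
  have : 0 < t * x by rewrite mulr_gt0.
  lra.
have FL_G v w i : `|G v ord0 i - G w ord0 i| <= L^-1 * `|v - w|.
  have h := DLip (- w) (- v) i.
  have e1 : - w - - v = v - w by rewrite opprK addrC.
  rewrite e1 in h; rewrite /G !mxE opprK addrC; exact: h.
have FH_G (t : R) v : 0 < t -> G (t *: v) = t *: G v.
  by move=> t0; rewrite /G -scalerN FH_D // scalerN.
have FM_G v (i k : 'I_n) (t : R) : k != i -> 0 < t ->
    G v ord0 i < G (v + t *: ek k) ord0 i.
  move=> ki t0; rewrite /G !mxE.
  have := DS (- (v + t *: ek k)) (t *: ek k) i.
  have -> : - (v + t *: ek k) + t *: ek k = - v by rewrite opprD addrNK.
  rewrite DC //.
  have := DE ki; move: (Dc (ek k) i) (Dc (- v) i) (Dc (- (v + t *: ek k)) i) => x y z h1 h2.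
  have : 0 < t * x by rewrite mulr_gt0.
  lra.
have DG v i : Dv v ord0 i <= G v ord0 i.
  rewrite /G !mxE; have := DB v i; move: (Dc v i) (Dc (- v) i) => x y; lra.
have GN v : G (- v) = - Dv v by rewrite /G opprK.
have Linv : 0 <= L^-1 by rewrite invr_ge0 ltW.
have ltz (v : 'rV[R]_n) i : vlt 0 v -> 0 < v ord0 i.
  by move=> h; have := h i; rewrite mxE.
have ltz' (v : 'rV[R]_n) i : vlt v 0 -> v ord0 i < 0.
  by move=> h; have := h i; rewrite mxE.
have lez' (v : 'rV[R]_n) i : vle v 0 -> v ord0 i <= 0.
  by move=> h; have := h i; rewrite mxE.
have negpos (v : 'rV[R]_n) : vlt v 0 -> vlt 0 (- v).
  by move=> h i; rewrite !mxE oppr_gt0; have := h i; rewrite mxE.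
have n12 : C1 -> ~ C2.
  move=> [v1 [w1 [d1 [e1 [[hv1 _] /Dv_uniq -> _ hd1 _]]]]].
  move=> [v2 [w2 [d2 [e2 [[hv2 _] /Dv_uniq -> _ hd2 _]]]]].
  have [i [t [t0 h]]] := Fcompare FH_D FM_D hn hv1 hv2.
  have := ltz _ i hd1; have := lez' _ i hd2.
  move: h; move: (Dv v1 ord0 i) (Dv v2 ord0 i) => x y h h1 h2.
  have : t * y <= 0 by rewrite mulr_ge0_le0 // ltW.
  lra.
have n13 : C1 -> ~ C3.
  move=> [v1 [w1 [d1 [e1 [[hv1 _] /Dv_uniq -> _ hd1 _]]]]].
  move=> [v2 [w2 [d2 [e2 [[hv2 _] /Dv_uniq -> _ hd2 _]]]]].
  have [i [t [t0 h]]] := Fcompare FH_D FM_D hn hv1 hv2.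
  have := ltz _ i hd1; have := ltz' _ i hd2.
  move: h; move: (Dv v1 ord0 i) (Dv v2 ord0 i) => x y h h1 h2.
  have : t * y < 0 by rewrite pmulr_rlt0.
  lra.
have n23 : C2 -> ~ C3.
  move=> [v1 [w1 [d1 [e1 [[_ hw1] _ /Dv_uniq -> _ hd1]]]]].
  move=> [v2 [w2 [d2 [e2 [[_ hw2] _ /Dv_uniq -> _ hd2]]]]].
  have [i [t [t0 h]]] := Fcompare FH_G FM_G hn (negpos _ hw1) (negpos _ hw2).
  rewrite !GN !mxE in h.
  have := lez' _ i hd1; have := ltz _ i hd2; rewrite !mxE.
  move: h; move: (Dc w1 i) (Dc w2 i) => x y h h1 h2.
  have : t * - y < 0 by rewrite pmulr_rlt0 // oppr_lt0.
  lra.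
have [v [r [hv ev]]] := PF Linv FL_D FH_D FM_D hn.
have [w [s [hw ew]]] := PF Linv FL_G FH_G FM_G hn.
have hnv : vlt (- v) 0 by move=> i; rewrite !mxE oppr_lt0; exact: ltz.
have hnw : vlt (- w) 0 by move=> i; rewrite !mxE oppr_lt0; exact: ltz.
have ex : C1 \/ C2 \/ C3.
  have [r0|r0] := ltP 0 r.
    left; exists v, (- v), (Dv v), (Dv (- v)); split => //; try exact: Dv_cvg.
      by move=> i; rewrite ev !mxE mulr_gt0 //; exact: ltz.
    move=> i; rewrite !mxE; have := DG v i; rewrite /G /= !mxE.
    have := congr1 (fun M : 'rV[R]_n => M ord0 i) ev; rewrite /= !mxE => ->.
    have := ltz _ i hv; move: (Dc (- v) i) (v ord0 i) => x y h1 h2.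
    have : 0 < r * y by rewrite mulr_gt0.
    lra.
  have [s0|s0] := ltP s 0.
    right; right; exists w, (- w), (Dv w), (Dv (- w)); split => //; try exact: Dv_cvg.
      move=> i; have h1 := DG w i.
      have h2 := congr1 (fun M : 'rV[R]_n => M ord0 i) ew.
      rewrite /G /= !mxE in h1 h2 *.
      have := ltz _ i hw; move: h1 h2; move: (Dc w i) (Dc (- w) i) (w ord0 i).
      move=> x y z h1 h2 h3.
      have : s * z < 0 by rewrite pmulr_llt0.
      lra.
    move=> i; rewrite mxE.
    have := congr1 (fun M : 'rV[R]_n => M ord0 i) ew; rewrite /G /= !mxE => h.
    have := ltz _ i hw; move: h; move: (Dc (- w) i) (w ord0 i) => x y h1 h2.
    have : s * y < 0 by rewrite pmulr_llt0.
    lra.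
  right; left; exists v, (- w), (Dv v), (Dv (- w)); split => //; try exact: Dv_cvg.
    move=> i; rewrite ev !mxE; apply: mulr_le0_ge0 => //.
    exact/ltW/ltz.
  move=> i; rewrite mxE.
  have := congr1 (fun M : 'rV[R]_n => M ord0 i) ew; rewrite /G /= !mxE => h.
  have := ltz _ i hw; move: h; move: (Dc (- w) i) (w ord0 i) => x y h1 h2.
  have : 0 <= s * y by rewrite mulr_ge0 // ltW.
  lra.
tauto.
Qed.
End Dir.

Theorem lemma3 (R : realType) (n : nat) (u : 'rV[R]_n -> 'rV[R]_n)
  (hn : (0 < n)%N) (hu : utility u) (a : 'rV[R]_n)
  (ha0 : vlt 0 a) (ha1 : vlt a (const_mx 1)) :
  let C1 := exists vup vdown du dd, [/\ vlt 0 vup /\ vlt vdown 0,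
              dirderiv_is u a vup du, dirderiv_is u a vdown dd,
              vlt 0 du & vlt dd 0] in
  let C2 := exists vup vdown du dd, [/\ vlt 0 vup /\ vlt vdown 0,
              dirderiv_is u a vup du, dirderiv_is u a vdown dd,
              vle du 0 & vle dd 0] in
  let C3 := exists vup vdown du dd, [/\ vlt 0 vup /\ vlt vdown 0,
              dirderiv_is u a vup du, dirderiv_is u a vdown dd,
              vlt du 0 & vlt 0 dd] in
  (C1 /\ ~ C2 /\ ~ C3) \/ (~ C1 /\ C2 /\ ~ C3) \/ (~ C1 /\ ~ C2 /\ C3).
Proof.
have ha0' i : 0 < a ord0 i by have := ha0 i; rewrite mxE.
have ha1' i : 0 < 1 - a ord0 i by have := ha1 i; rewrite mxE subr_gt0.
have hpos : forall i, 0 < Order.min (a ord0 i) (1 - a ord0 i).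
  by move=> i; rewrite lt_min ha0' ha1'.
have [L L0 hL] := @fin_min _ _ (fun i => Order.min (a ord0 i) (1 - a ord0 i)) hpos.
have La i : L <= a ord0 i by have := hL i; rewrite le_min => /andP[].
have La1 i : L <= 1 - a ord0 i by have := hL i; rewrite le_min => /andP[].
exact: (final_dir hu L0 La La1 hn).
Qed.
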